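(* Let $L$ be an atomic orthomodular lattice and let $V\in\mathcal{B}(L)$ be a $2$-dimensional BSA with $\mathcal{F}_V=\{P,P^{\perp}\}$ which is not spiked and such that each of $P$ and $P^{\perp}$ is the join of three or more pairwise orthogonal atoms of $L$. Let $A,B\in\mathcal{M}_V$. Then $A$ and $B$ have the same leading element if and only if there exist a $2$-dimensional, non-spiked $W\in\mathcal{B}(L)$ with $W\neq V$ and $C,D\in\mathcal{M}_W$ such that $A\subseteq C$ and $B\subseteq D$.
   Context: $L$ is an orthomodular lattice with $0$, $1$ and orthocomplementation $P\mapsto P^{\perp}$, which is atomic (every nonzero element lies above an atom, i.e. a minimal nonzero element). Elements $P,Q$ are orthogonal if $P\le Q^{\perp}$. A Boolean subalgebra (BSA) $V$ of $L$ is generated by a family $\mathcal{F}$ of nonzero pairwise orthogonal elements of $L$ with join $1$ if the elements of $\mathcal{F}$ are the atoms of $V$ and every element of $V$ is a join of elements of $\mathcal{F}$; this family is denoted $\mathcal{F}_V$. $\mathcal{B}(L)$ is the set of BSAs of $L$ generated by some such family, ordered by inclusion; the dimension of $V$ is the cardinality of $\mathcal{F}_V$. An mBSA is an element of $\mathcal{B}(L)$ generated by a family of pairwise orthogonal atoms of $L$ with join $1$. $V\in\mathcal{B}(L)$ is spiked if it is an mBSA or its generating family contains precisely one element that is not an atom of $L$ (all others being atoms); in the latter case this unique non-atom is called the leading element of $V$. For a $2$-dimensional non-spiked $V\in\mathcal{B}(L)$, $\mathcal{S}_V$ denotes the set of spiked elements of $\mathcal{B}(L)$ containing $V$, and $\mathcal{M}_V$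 the set of minimal elements of $\mathcal{S}_V$ with respect to inclusion. *)

(* Defs.v *)
From HB Require Import structures.
From mathcomp Require Import all_boot all_order.
Set Implicit Arguments. Unset Strict Implicit. Unset Printing Implicit Defensive.
Import Order.Theory.
Local Open Scope order_scope.

Section OML.
Context {d : Order.disp_t} {L : tbLatticeType d} (oc : L -> L).

Record is_OML : Prop := {
  oc_invol : forall x, oc (oc x) = x;
  oc_anti : forall x y, x <= y -> oc y <= oc x;
  oc_meet : forall x, x `&` oc x = \bot;
  oc_join : forall x, x `|` oc x = \top;
  oml_law : forall x y, x <= y -> y = x `|` (y `&` oc x)
}.

Definition atomL (a : L) : Prop :=
  a <> \bot /\ forall y, y <= a -> y = \bot \/ y = a.

Definition atomic : Prop :=
  forall x : L, x <> \bot -> exists a, atomL a /\ a <= x.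

Definition orth (x y : L) : Prop := x <= oc y.

Definition is_sup (S : L -> Prop) (x : L) : Prop :=
  (forall y, S y -> y <= x) /\ (forall z, (forall y, S y -> y <= z) -> x <= z).

Definition pairwise_orth (S : L -> Prop) : Prop :=
  forall x y, S x -> S y -> x <> y -> orth x y.

Definition BSA (V : L -> Prop) : Prop :=
  V \bot /\ V \top /\
  (forall x y, V x -> V y -> V (x `&` y)) /\
  (forall x y, V x -> V y -> V (x `|` y)) /\
  (forall x, V x -> V (oc x)) /\
  (forall x y z, V x -> V y -> V z -> x `&` (y `|` z) = (x `&` y) `|` (x `&` z)).

Definition Vatom (V : L -> Prop) (x : L) : Prop :=
  V x /\ x <> \bot /\ forall y, V y -> y <= x -> y = \bot \/ y = x.

Definition generated_by (V F : L -> Prop) : Prop :=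
  (forall x, F x -> x <> \bot) /\ pairwise_orth F /\ is_sup F \top /\
  (forall x, F x <-> Vatom V x) /\
  (forall v, V v -> exists S : L -> Prop, (forall y, S y -> F y) /\ is_sup S v).

Definition inB (V : L -> Prop) : Prop :=
  BSA V /\ exists F, generated_by V F.

Definition FV (V : L -> Prop) : L -> Prop := Vatom V.

Definition mBSA (V : L -> Prop) : Prop :=
  inB V /\ forall x, FV V x -> atomL x.

Definition leading_element (V : L -> Prop) (x : L) : Prop :=
  FV V x /\ ~ atomL x /\ forall y, FV V y -> y <> x -> atomL y.

Definition spiked (V : L -> Prop) : Prop :=
  inB V /\ (mBSA V \/ exists x, leading_element V x).

Definition two_dim (V : L -> Prop) : Prop :=
  exists Q R, Q <> R /\ forall x, FV V x <-> x = Q \/ x = R.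

Definition subsetL (A B : L -> Prop) : Prop := forall x, A x -> B x.

Definition S_ (V : L -> Prop) (A : L -> Prop) : Prop :=
  spiked A /\ subsetL V A.

Definition M_ (V : L -> Prop) (A : L -> Prop) : Prop :=
  S_ V A /\ forall A', S_ V A' -> subsetL A' A -> subsetL A A'.

Definition join_of_three_or_more_atoms (x : L) : Prop :=
  exists S : L -> Prop,
    (forall a, S a -> atomL a) /\ pairwise_orth S /\ is_sup S x /\
    exists a b c, S a /\ S b /\ S c /\ a <> b /\ a <> c /\ b <> c.
End OML.

(* Main.v *)
Require Import Defs.
From mathcomp Require Import all_boot all_order.
From Stdlib Require Import Classical.
Set Implicit Arguments. Unset Strict Implicit. Unset Printing Implicit Defensive.
Import Order.Theory.
Local Open Scope order_scope.

Section Basic.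
Context {d : Order.disp_t} {L : tbLatticeType d} (oc : L -> L) (H : is_OML oc).

Lemma ocK x : oc (oc x) = x. Proof. exact: oc_invol H x. Qed.
Lemma ocA x y : x <= y -> oc y <= oc x. Proof. exact: (oc_anti H). Qed.
Lemma ocI x : x `&` oc x = \bot. Proof. exact: oc_meet H x. Qed.
Lemma ocU x : x `|` oc x = \top. Proof. exact: oc_join H x. Qed.
Lemma omlE x y : x <= y -> y = x `|` (y `&` oc x). Proof. exact: (oml_law H). Qed.

Lemma le_oc x y : x <= oc y -> y <= oc x.
Proof. by move=> /ocA; rewrite ocK. Qed.
Lemma le_ocE x y : (oc x <= oc y) -> y <= x.
Proof. by move=> /ocA; rewrite !ocK. Qed.
Lemma le0 (x : L) : x <= \bot -> x = \bot.
Proof. by move=> h; apply: le_anti; rewrite h le0x. Qed.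
Lemma le_both x p : x <= p -> x <= oc p -> x = \bot.
Proof. by move=> h1 h2; apply: le0; rewrite -(ocI p) lexI h1 h2. Qed.
Lemma oc1 : oc \top = \bot.
Proof. by rewrite -(ocI \top) meet1x. Qed.
Lemma oc0 : oc \bot = \top.
Proof. by rewrite -oc1 ocK. Qed.
Lemma ocUE x y : oc (x `|` y) = oc x `&` oc y.
Proof.
apply: le_anti; apply/andP; split.
  by rewrite lexI !ocA ?leUl ?leUr.
apply: le_oc; rewrite leUx; apply/andP; split; apply: le_oc; [exact: leIl| exact: leIr].
Qed.
Lemma ocIE x y : oc (x `&` y) = oc x `|` oc y.
Proof. by rewrite -[x in LHS]ocK -[y in LHS]ocK -ocUE ocK. Qed.
Lemma meet_oc x y : x `&` y = oc (oc x `|` oc y).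
Proof. by rewrite ocUE !ocK. Qed.

Lemma L4 x z p : x <= p -> z <= oc p -> (x `|` z) `&` p = x.
Proof.
move=> hx hz.
have h1 : x <= (x `|` z) `&` p by rewrite lexI leUl hx.
rewrite {1}(omlE h1).
suff -> : (x `|` z) `&` p `&` oc x = \bot by rewrite joinx0.
apply: le0; have w1 : (x `|` z) `&` p `&` oc x <= oc (x `|` z).
  rewrite ocUE lexI leIr /=; apply: le_trans (leIl _ _) _; apply: le_trans (leIr _ _) _.
  exact: le_oc.
rewrite -(ocI (x `|` z)) lexI w1 andbT; apply: le_trans (leIl _ _) _; exact: leIl.
Qed.

Lemma L4r x z p : x <= p -> z <= oc p -> (x `|` z) `&` oc p = z.
Proof. move=> hx hz; rewrite joinC L4 //; by rewrite ocK. Qed.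

Lemma L5 y z p : y <= p -> z <= oc p -> oc (y `|` z) = (p `&` oc y) `|` (oc p `&` oc z).
Proof.
move=> hy hz; set m := (p `&` oc y) `|` (oc p `&` oc z); set n := oc (y `|` z).
have hmn : m <= n.
  rewrite /n ocUE /m leUx !lexI !leIr /= ?andbT; apply/andP; split.
    apply: le_trans (leIl _ _) _; exact: le_oc.
  apply: le_trans (leIl _ _) _; apply: ocA; exact hy.
rewrite {1}(omlE hmn); suff -> : n `&` oc m = \bot by rewrite joinx0.
rewrite /n /m -ocUE.
have -> : y `|` z `|` (p `&` oc y `|` oc p `&` oc z) = p `|` oc p.
  have e1 : p = y `|` (p `&` oc y) by exact: omlE.
  have e2 : oc p = z `|` (oc p `&` oc z) by exact: omlE.
  by rewrite joinACA -e1 -e2.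
by rewrite ocU oc1.
Qed.

Lemma bsa_compat (V : L -> Prop) x y : BSA oc V -> V x -> V y -> x `&` y = \bot -> x <= oc y.
Proof.
move=> [h0 [h1 [hI [hU [hC hD]]]]] vx vy e.
have := hD x y (oc y) vx vy (hC _ vy); rewrite ocU meetx1 e join0x => ->.
exact: leIr.
Qed.

Lemma sup_unique (S : L -> Prop) x y : is_sup S x -> is_sup S y -> x = y.
Proof. by move=> [h1 h2] [h3 h4]; apply: le_anti; rewrite h2 // h4. Qed.

Lemma sup_union (S1 S2 : L -> Prop) x1 x2 : is_sup S1 x1 -> is_sup S2 x2 ->
  is_sup (fun y => S1 y \/ S2 y) (x1 `|` x2).
Proof.
move=> [a1 b1] [a2 b2]; split.
  move=> y [/a1 h|/a2 h]; [exact: le_trans h (leUl _ _)| exact: le_trans h (leUr _ _)].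
move=> z hz; rewrite leUx b1 ?b2 //= => y hy; apply: hz; tauto.
Qed.

Lemma sup_empty : is_sup (fun _ => False) (\bot : L).
Proof. by split => // z _; rewrite le0x. Qed.
Lemma sup_single (x : L) : is_sup (fun y => y = x) x.
Proof. by split => [y ->|z h]; rewrite ?lexx // h. Qed.

End Basic.

Section Atoms.
Context {d : Order.disp_t} {L : tbLatticeType d} (oc : L -> L) (H : is_OML oc).

Lemma is_sup_ext (S S' : L -> Prop) x : (forall y, S y <-> S' y) -> is_sup S x -> is_sup S' x.
Proof.
move=> e [h1 h2]; split; first by move=> y /e /h1.
by move=> z hz; apply: h2 => y /e /hz.
Qed.

Lemma vatom_ext (X Y : L -> Prop) t : (forall x, X x <-> Y x) -> Vatom X t -> Vatom Y t.
Proof.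
move=> e [h1 [h2 h3]]; split; first by apply/e.
by split=> // y /e; apply: h3.
Qed.

Lemma vatom_orth (X : L -> Prop) s t : BSA oc X -> Vatom X s -> Vatom X t -> s <> t -> s <= oc t.
Proof.
move=> hX [xs [s0 hs]] [xt [t0 ht]] st.
have hB := hX; case: hX => [_ [_ [hI _]]].
case: (hs (s `&` t) (hI _ _ xs xt) (leIl _ _)) => e.
  exact: bsa_compat hB xs xt e.
have : s <= t by rewrite -e leIr.
move=> /(ht _ xs) [//|//].
Qed.

Lemma vatom_split (X : L -> Prop) p s : BSA oc X -> X p -> Vatom X s -> s <= p \/ s <= oc p.
Proof.
move=> hB xp [xs [s0 hs]]; have hB' := hB; case: hB' => [_ [_ [hI _]]].
case: (hs (s `&` p) (hI _ _ xs xp) (leIl _ _)) => e.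
  right; exact: bsa_compat hB xs xp e.
by left; rewrite -e leIr.
Qed.

Lemma atom_vatom (X : L -> Prop) t : X t -> atomL t -> Vatom X t.
Proof. by move=> xt [t0 ht]; split=> //; split=> // y _; apply: ht. Qed.

Lemma gen_vatom (X : L -> Prop) : inB oc X -> generated_by oc X (Vatom X).
Proof.
move=> [hB [F [h0 [ho [hs [he hv]]]]]].
split; first by move=> x [_ []].
split; first by move=> x y /he hx /he hy; apply: ho.
split; first exact: (is_sup_ext he hs).
split; first by move=> x; split.
move=> v /hv [S [hS1 hS2]]; exists S; split=> // y /hS1 /he; done.
Qed.

Lemma sup_eq_ext (S S' : L -> Prop) x v : (forall y, S y <-> S' y) -> is_sup S' v -> is_sup S x -> x = v.
Proof.
move=> e h1 h2; apply: (sup_unique h2); apply: (is_sup_ext _ h1) => y; split; exact: (proj2 (e y)) || exact: (proj1 (e y)).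
Qed.

Lemma V_elems (V0 : L -> Prop) P0 : inB oc V0 -> (forall x, FV V0 x <-> x = P0 \/ x = oc P0) ->
  forall x, V0 x <-> (x = \bot \/ x = \top \/ x = P0 \/ x = oc P0).
Proof.
move=> hV hF x; have [_ [_ [_ [_ hv]]]] := gen_vatom hV.
have [hB _] := hV; have [h0 [h1 _]] := hB.
have vP : V0 P0 by have [] := (proj2 (hF P0) (or_introl erefl)).
have vPc : V0 (oc P0) by have [] := (proj2 (hF (oc P0)) (or_intror erefl)).
split; last by case=> [->|[->|[->|->]]].
move=> /hv [S [hS1 hS2]].
have hS : forall y, S y -> y = P0 \/ y = oc P0 by move=> y /hS1 /hF.
case: (classic (S P0)) => sP; case: (classic (S (oc P0))) => sQ.
- right; left; apply: (sup_eq_ext (S' := fun y => y = P0 \/ y = oc P0)).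
  + by move=> y; split; [apply: hS | case=> e; subst y].
  + rewrite -(ocU H P0); apply: sup_union; exact: sup_single.
  + exact: hS2.
- right; right; left; apply: (sup_eq_ext (S' := fun y => y = P0)) hS2.
  + move=> y; split; last by move=> ->.
    by move=> sy; case: (hS _ sy) => // e; rewrite e in sy.
  + exact: sup_single.
- right; right; right; apply: (sup_eq_ext (S' := fun y => y = oc P0)) hS2.
  + move=> y; split; last by move=> ->.
    by move=> sy; case: (hS _ sy) => // e; rewrite e in sy.
  + exact: sup_single.
- left; apply: (sup_eq_ext (S' := fun _ => False)) hS2.
  + move=> y; split=> // sy.
    by case: (hS _ sy) => e; rewrite e in sy.
  + exact: sup_empty.
Qed.

Lemma FV_ne0 (V0 : L -> Prop) x : FV V0 x -> x <> \bot.
Proof. by case=> _ []. Qed.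

Lemma ns_nonatoms (V0 : L -> Prop) P0 : inB oc V0 -> (forall x, FV V0 x <-> x = P0 \/ x = oc P0) ->
  ~ spiked oc V0 -> ~ atomL P0 /\ ~ atomL (oc P0).
Proof.
move=> hV hF hns.
have hP : forall x, FV V0 x -> x <> P0 -> x = oc P0 by move=> x /hF [].
have hQ : forall x, FV V0 x -> x <> oc P0 -> x = P0 by move=> x /hF [].
have fP : FV V0 P0 by apply/hF; left.
have fQ : FV V0 (oc P0) by apply/hF; right.
split=> aP.
- apply: hns; split=> //; case: (classic (atomL (oc P0))) => aQ.
    by left; split=> // x /hF [->|->].
  by right; exists (oc P0); split=> //; split=> // y /hQ h /h ->.
- apply: hns; split=> //; case: (classic (atomL P0)) => aQ.
    by left; split=> // x /hF [->|->].
  by right; exists P0; split=> //; split=> // y /hP h /h ->.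
Qed.

End Atoms.

Section Restr.
Context {d : Order.disp_t} {L : tbLatticeType d} (oc : L -> L) (H : is_OML oc).

Definition restr (X : L -> Prop) (P0 : L) : L -> Prop :=
  fun x => X x /\ (x `&` P0 = \bot \/ P0 <= x).

Variables (X : L -> Prop) (P0 : L).
Hypothesis hB : BSA oc X.
Hypothesis xP : X P0.
Hypothesis P00 : P0 <> \bot.

Lemma restr_BSA : BSA oc (restr X P0).
Proof.
have hB' := hB; case: hB' => [h0 [h1 [hI [hU [hC hD]]]]].
split; first by split=> //; left; rewrite meet0x.
split; first by split=> //; right; rewrite lex1.
split.
  move=> x y [xx ex] [xy ey]; split; first exact: hI.
  case: ex => ex.
    left; apply: le0; rewrite -ex lexI leIr andbT; apply: le_trans (leIl _ _) _; exact: leIl.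
  case: ey => ey.
    left; apply: le0; rewrite -ey lexI leIr andbT; apply: le_trans (leIl _ _) _; exact: leIr.
  by right; rewrite lexI ex ey.
split.
  move=> x y [xx ex] [xy ey]; split; first exact: hU.
  case: ex => ex; last by right; apply: le_trans ex (leUl _ _).
  case: ey => ey; last by right; apply: le_trans ey (leUr _ _).
  left; rewrite meetC hD // (meetC P0 x) (meetC P0 y) ex ey joinxx //.
split.
  move=> x [xx ex]; split; first exact: hC.
  case: ex => ex.
    right; apply: (le_oc H); exact: (bsa_compat H hB xx xP ex).
  left; apply: le0; rewrite -(ocI H P0) lexI leIr /=.
  apply: le_trans (leIl _ _) _; exact: (ocA H).
by move=> x y z [] + _ [] + _ [] + _; apply: hD.
Qed.

Lemma restr_vatom t : Vatom (restr X P0) t <-> t = P0 \/ (Vatom X t /\ t <= oc P0).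
Proof.
have hB' := hB; case: hB' => [h0 [h1 [hI [hU [hC hD]]]]].
split.
  move=> [[xt et] [t0 ht]]; case: et => et.
    right; have tP : t <= oc P0 by exact: (bsa_compat H hB xt xP et).
    split=> //; split=> //; split=> // y xy yt; apply: ht => //; split=> //.
    left; apply: (le_both H (leIr _ _) _); apply: le_trans (leIl _ _) _; exact: le_trans yt tP.
  left; case: (ht P0) => //; first by split=> //; right.
move=> [->|[[xt [t0 ht]] tP]].
  split; first by split=> //; right.
  split=> // y [xy [ey|ey]] yP.
    by left; rewrite -ey; apply/esym/meet_l.
  by right; apply: le_anti; rewrite ey yP.
split.
  split=> //; left; apply: (le_both H (leIr _ _) _); apply: le_trans (leIl _ _) _; exact: tP.
split=> // y [xy _]; exact: ht.
Qed.

Definition FR (t : L) := t = P0 \/ (Vatom X t /\ t <= oc P0).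

Lemma restr_gen : inB oc X -> generated_by oc (restr X P0) FR.
Proof.
move=> hX; have [gh0 [gho [ghs [ghe ghv]]]] := gen_vatom hX.
have split_at : forall s, Vatom X s -> s <= P0 \/ s <= oc P0.
  by move=> s; apply: (vatom_split H hB xP).
split; first by move=> x [->|[[_ []]]].
split.
  move=> x y [->|[ax xP']] [->|[ay yP']] ne //.
  - by rewrite /orth; apply: (le_oc H).
  - exact: (vatom_orth H hB ax ay ne).
split.
  split=> [y _|z hz]; first by rewrite lex1.
  have [_ hs] := ghs; apply: hs => s as_.
  case: (split_at s as_) => h.
    by apply: le_trans h _; apply: hz; left.
  by apply: hz; right.
split; first by move=> x; rewrite restr_vatom.
move=> v [xv ev]; have [S [hS1 hS2]] := ghv v xv.
case: ev => ev.
  have vP : v <= oc P0 by exact: (bsa_compat H hB xv xP ev).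
  exists S; split=> // y sy; right; split; first exact: hS1.
  have [u _] := hS2; exact: le_trans (u _ sy) vP.
exists (fun s => s = P0 \/ (S s /\ s <= oc P0)); split.
  by move=> y [->|[sy yP]]; [left| right; split=> //; apply: hS1].
have [u l] := hS2; split.
  by move=> y [->|[sy _]] //; exact: u.
move=> z hz; apply: l => s sy.
case: (split_at s (hS1 _ sy)) => h.
  by apply: le_trans h _; apply: hz; left.
by apply: hz; right.
Qed.

Lemma restr_lead : inB oc X -> ~ atomL P0 -> (forall t, Vatom X t -> t <= oc P0 -> atomL t) ->
  inB oc (restr X P0) /\ spiked oc (restr X P0) /\ leading_element (restr X P0) P0.
Proof.
move=> hX naP hat.
have hin : inB oc (restr X P0) by split; [exact: restr_BSA | exists FR; exact: restr_gen].
have hl : leading_element (restr X P0) P0.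
  split; first by apply/restr_vatom; left.
  split=> // y /restr_vatom [->//|[ay yP]] _; exact: hat.
split=> //; split=> //; split=> //; right; exists P0; exact: hl.
Qed.

Lemma restr_sub x : restr X P0 x -> X x. Proof. by case. Qed.

End Restr.

Section Claims.
Context {d : Order.disp_t} {L : tbLatticeType d} (oc : L -> L) (H : is_OML oc).

Lemma lead_ext (X Y : L -> Prop) p : (forall x, X x <-> Y x) -> leading_element X p -> leading_element Y p.
Proof.
move=> e [h1 [h2 h3]]; split; first exact: vatom_ext e h1.
split=> // y hy ne; apply: h3 ne; apply: vatom_ext hy => x.
by split; move/e.
Qed.

Lemma lead_uniq (X : L -> Prop) x y : leading_element X x -> leading_element X y -> x = y.
Proof.
move=> [hx [nx ax]] [hy [ny ay]]; apply: NNPP => ne.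
by apply: ny; apply: ax => // e; apply: ne.
Qed.

Lemma inB_spiked (X : L -> Prop) : spiked oc X -> inB oc X. Proof. by case. Qed.

Lemma M_lead_aux (V0 A : L -> Prop) P0 p :
  inB oc V0 -> (forall x, FV V0 x <-> x = P0 \/ x = oc P0) -> M_ oc V0 A ->
  (p = P0 \/ p = oc P0) -> ~ atomL p ->
  (forall t, Vatom A t -> t <= oc p -> atomL t) -> leading_element A p.
Proof.
move=> hV hF [[hsp hsub] hmin] hp nap hat.
have hA := inB_spiked hsp; have hAB := proj1 hA.
have hVe := V_elems H hV hF.
have Ap : A p by case: hp => ->; apply: hsub; apply/hVe; tauto.
have p0 : p <> \bot.
  case: hp => ->; [apply: (FV_ne0 (V0 := V0)); apply/hF; tauto|apply: (FV_ne0 (V0 := V0)); apply/hF; tauto].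
have [hRin [hRsp hRl]] := restr_lead H hAB Ap p0 hA nap hat.
have hRB := proj1 hRin.
have Rp : restr A p p by split => //; right.
have Rpc : restr A p (oc p) by have [_ [_ [_ [_ [hC _]]]]] := hRB; exact: hC.
have RPQ : restr A p P0 /\ restr A p (oc P0).
  by case: hp => e; subst p; split => //; rewrite (ocK H) in Rpc.
have hS : S_ oc V0 (restr A p).
  split=> // x /hVe [->|[->|[->|->]]].
  - by have [] := hRB.
  - by have [_ []] := hRB.
  - exact: (proj1 RPQ).
  - exact: (proj2 RPQ).
have hsub2 := hmin _ hS (fun x => @restr_sub _ _ A p x).
apply: lead_ext hRl => x; split; [exact: restr_sub| exact: hsub2].
Qed.

Lemma M_lead (V0 A : L -> Prop) P0 :
  inB oc V0 -> (forall x, FV V0 x <-> x = P0 \/ x = oc P0) -> ~ spiked oc V0 -> M_ oc V0 A ->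
  leading_element A P0 \/ leading_element A (oc P0).
Proof.
move=> hV hF hns hM.
have [naP naQ] := ns_nonatoms hV hF hns.
have hA := inB_spiked (proj1 (proj1 hM)).
have hVe := V_elems H hV hF.
have AP : A P0 by apply: (proj2 (proj1 hM)); apply/hVe; tauto.
case: (classic (exists t, Vatom A t /\ t <= oc P0 /\ ~ atomL t)) => ex.
  right; case: ex => t [at_ [tP nat]].
  apply: (M_lead_aux (V0 := V0) (P0 := P0)) => //; first by right.
  move=> s as_ sP; rewrite ocK // in sP.
  case: (proj2 (proj1 (proj1 hM))) => [[_ hm]|[u [hu [nu au]]]]; first exact: hm.
  have tu : t = u by apply: NNPP => ne; apply: nat; apply: au.
  apply: au => // su; subst u; rewrite su in sP.
  by apply: (FV_ne0 (V0 := A) (x := t)) => //; apply: (le_both H sP tP).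
left; apply: (M_lead_aux (V0 := V0) (P0 := P0)) => //; first by left.
move=> t at_ tP; apply: NNPP => nat; apply: ex; by exists t.
Qed.

Lemma two_dim_oc (W : L -> Prop) : inB oc W -> two_dim W -> exists Q, forall x, FV W x <-> x = Q \/ x = oc Q.
Proof.
move=> hW [Q [R [ne hQR]]].
have [_ [ho [[_ hs] _]]] := gen_vatom hW.
have fQ : Vatom W Q by apply/hQR; left.
have fR : Vatom W R by apply/hQR; right.
have QR : Q <= oc R by exact: ho.
have top : Q `|` R = \top.
  apply: le_anti; rewrite lex1 /=; apply: hs => y /hQR [->|->]; [exact: leUl|exact: leUr].
have [_ [_ [_ [_ [hC hD]]]]] := proj1 hW.
have e : oc Q = R.
  apply: le_anti; rewrite (le_oc H QR) andbT.
  have := hD (oc Q) Q R (hC _ (proj1 fQ)) (proj1 fQ) (proj1 fR).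
  rewrite top meetx1 meetC (ocI H) join0x => ->; exact: leIr.
by exists Q => x; rewrite e.
Qed.

Lemma lead_bound (A C : L -> Prop) P0 u : inB oc A -> leading_element A P0 -> A (oc P0) ->
  inB oc C -> subsetL A C -> leading_element C u -> u <= P0.
Proof.
move=> hA [fP [naP atA]] AQ hC AC [fu [nau _]].
have [_ [_ [_ [_ hv]]]] := gen_vatom hA.
have [S [hS1 [hS2 hS3]]] := hv _ AQ.
apply: (le_ocE H); apply: hS3 => s sS.
have as_ := hS1 _ sS.
have sQ : s <= oc P0 := hS2 _ sS.
have sP : s <> P0.
  move=> e; rewrite e in sQ; apply: (FV_ne0 (V0 := A) (x := P0)) => //; exact: (le_both H (lexx _) sQ).
have ats : atomL s := atA _ as_ sP.
have vs : Vatom C s := atom_vatom (AC _ (proj1 as_)) ats.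
have su : s <> u by move=> e; apply: nau; rewrite -e.
apply: (vatom_orth H (proj1 hC) vs fu su).
Qed.

Lemma cross (V0 W A B C D : L -> Prop) P0 Q u v :
  (forall x, V0 x <-> (x = \bot \/ x = \top \/ x = P0 \/ x = oc P0)) ->
  inB oc W -> (forall x, FV W x <-> x = Q \/ x = oc Q) -> ~ (forall x, W x <-> V0 x) ->
  inB oc A -> inB oc B -> A (oc P0) -> B P0 ->
  leading_element A P0 -> leading_element B (oc P0) ->
  inB oc C -> inB oc D -> subsetL A C -> subsetL B D ->
  leading_element C u -> leading_element D v -> (u = Q \/ u = oc Q) -> (v = Q \/ v = oc Q) -> False.
Proof.
move=> hVe hW hFW hWV hA hB AQ BP lA lB hC hD AC BD lC lD hu hv.
have uP : u <= P0 := lead_bound hA lA AQ hC AC lC.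
have vQ : v <= oc P0 by apply: (lead_bound hB lB) hD BD lD; rewrite ocK.
have u0 : u <> \bot by case: lC => [[_ []]].
have v0 : v <> \bot by case: lD => [[_ []]].
have euv : v = oc u.
  case: (classic (u = v)) => e.
    by exfalso; subst v; apply: u0; apply: (le_both H uP vQ).
  case: hu => eu; case: hv => ev; subst u v => //; by rewrite ocK.
rewrite euv in vQ.
have Pu : P0 <= u by apply: (le_ocE H).
have uP0 : u = P0 by apply: le_anti; rewrite uP Pu.
apply: hWV => x; rewrite hVe.
have hWe := V_elems H hW hFW x.
rewrite hWe; subst u.
case: hu => e; subst P0; first by tauto.
rewrite ocK; tauto.
Qed.
End Claims.

Section B4S.
Context {d : Order.disp_t} {L : tbLatticeType d} (oc : L -> L) (H : is_OML oc).
Variables e f : L.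
Hypothesis ef : e <= oc f.

Definition B4 (y : L) := y = \bot \/ y = e \/ y = f \/ y = e `|` f.

Lemma ef0 : e `&` f = \bot.
Proof. apply: (le_both H (leIr _ _)); apply: le_trans (leIl _ _) ef. Qed.
Lemma fe0 : f `&` e = \bot. Proof. by rewrite meetC ef0. Qed.
Lemma m1 : e `&` (e `|` f) = e. Proof. exact: joinKI. Qed.
Lemma m2 : f `&` (e `|` f) = f. Proof. by rewrite joinC joinKI. Qed.
Lemma m3 : (e `|` f) `&` e = e. Proof. by rewrite meetC joinKI. Qed.
Lemma m4 : (e `|` f) `&` f = f. Proof. by rewrite meetC joinC joinKI. Qed.
Lemma j1 : e `|` (e `|` f) = e `|` f. Proof. by rewrite joinA joinxx. Qed.
Lemma j2 : f `|` (e `|` f) = e `|` f. Proof. by rewrite joinCA joinxx. Qed.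
Lemma j3 : (e `|` f) `|` e = e `|` f. Proof. by rewrite joinAC joinxx. Qed.
Lemma j4 : (e `|` f) `|` f = e `|` f. Proof. by rewrite -joinA joinxx. Qed.
Lemma j5 : f `|` e = e `|` f. Proof. by rewrite joinC. Qed.

Ltac simp4 := repeat progress rewrite ?meet0x ?meetx0 ?join0x ?joinx0 ?meetxx ?joinxx
  ?ef0 ?fe0 ?m1 ?m2 ?m3 ?m4 ?j1 ?j2 ?j3 ?j4 ?j5.
Ltac close4 := rewrite /B4; simp4;
  first [ by left | by right; left | by right; right; left | by right; right; right ].

Lemma B4_join y y' : B4 y -> B4 y' -> B4 (y `|` y').
Proof. by case=> [->|[->|[->|->]]]; case=> [->|[->|[->|->]]]; close4. Qed.

Lemma B4_meet y y' : B4 y -> B4 y' -> B4 (y `&` y').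
Proof. by case=> [->|[->|[->|->]]]; case=> [->|[->|[->|->]]]; close4. Qed.

Lemma B4_distr y y1 y2 : B4 y -> B4 y1 -> B4 y2 -> y `&` (y1 `|` y2) = (y `&` y1) `|` (y `&` y2).
Proof.
by case=> [->|[->|[->|->]]]; case=> [->|[->|[->|->]]]; case=> [->|[->|[->|->]]]; simp4.
Qed.

Lemma B4_le y : B4 y -> y <= e `|` f.
Proof. by case=> [->|[->|[->|->]]]; rewrite ?le0x ?leUl ?leUr ?lexx. Qed.

Lemma B4_compl y : B4 y -> B4 ((e `|` f) `&` oc y).
Proof.
have fe : f <= oc e by exact: (le_oc H ef).
case=> [->|[->|[->|->]]].
- by rewrite (oc0 H) meetx1; close4.
- by rewrite joinC (L4 H fe) ?(ocK H) //; close4.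
- by rewrite (L4 H ef) ?(ocK H) //; close4.
- by rewrite (ocI H); close4.
Qed.

End B4S.

Section Prod.
Context {d : Order.disp_t} {L : tbLatticeType d} (oc : L -> L) (H : is_OML oc).
Variables (p : L) (Y Z : L -> Prop).
Hypotheses (Yle : forall y, Y y -> y <= p) (Zle : forall z, Z z -> z <= oc p).
Hypotheses (Y0 : Y \bot) (Yp : Y p) (YU : forall y y', Y y -> Y y' -> Y (y `|` y'))
  (YC : forall y, Y y -> Y (p `&` oc y))
  (YD : forall y y1 y2, Y y -> Y y1 -> Y y2 -> y `&` (y1 `|` y2) = (y `&` y1) `|` (y `&` y2)).
Hypotheses (Z0 : Z \bot) (Zp : Z (oc p)) (ZU : forall y y', Z y -> Z y' -> Z (y `|` y'))
  (ZC : forall y, Z y -> Z (oc p `&` oc y))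
  (ZD : forall y y1 y2, Z y -> Z y1 -> Z y2 -> y `&` (y1 `|` y2) = (y `&` y1) `|` (y `&` y2)).

Definition Cset (x : L) := exists y z, Y y /\ Z z /\ x = y `|` z.

Lemma C_p x : Cset x -> Y (x `&` p) /\ Z (x `&` oc p) /\ x = (x `&` p) `|` (x `&` oc p).
Proof.
move=> [y [z [hy [hz ->]]]].
rewrite (L4 H (Yle hy) (Zle hz)) (L4r H (Yle hy) (Zle hz)); done.
Qed.

Lemma C_join x x' : Cset x -> Cset x' -> Cset (x `|` x').
Proof.
move=> [y [z [hy [hz ->]]]] [y' [z' [hy' [hz' ->]]]].
by exists (y `|` y'), (z `|` z'); rewrite joinACA; split; [apply: YU|split; [apply: ZU|]].
Qed.

Lemma C_oc x : Cset x -> Cset (oc x).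
Proof.
move=> [y [z [hy [hz ->]]]].
exists (p `&` oc y), (oc p `&` oc z); split; first exact: YC.
split; first exact: ZC.
exact: (L5 H (Yle hy) (Zle hz)).
Qed.

Lemma C_meet x x' : Cset x -> Cset x' -> Cset (x `&` x').
Proof.
by move=> hx hx'; rewrite (meet_oc H); apply: C_oc; apply: C_join; apply: C_oc.
Qed.

Lemma C_joinp x x' q : (q = p \/ q = oc p) -> Cset x -> Cset x' -> (x `|` x') `&` q = (x `&` q) `|` (x' `&` q).
Proof.
move=> hq [y [z [hy [hz ->]]]] [y' [z' [hy' [hz' ->]]]].
have yy : y `|` y' <= p by rewrite leUx !Yle.
have zz : z `|` z' <= oc p by rewrite leUx !Zle.
rewrite joinACA; case: hq => ->.
  by rewrite !(L4 H) // ?Zle ?Yle.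
by rewrite !(L4r H) // ?Zle ?Yle.
Qed.

Lemma meet_q (x x' q : L) : (x `&` x') `&` q = (x `&` q) `&` (x' `&` q).
Proof. by rewrite meetACA meetxx. Qed.

Lemma C_eq u u' : Cset u -> Cset u' -> u `&` p = u' `&` p -> u `&` oc p = u' `&` oc p -> u = u'.
Proof.
move=> /C_p [_ [_ e1]] /C_p [_ [_ e2]] h1 h2; by rewrite e1 e2 h1 h2.
Qed.

Lemma C_BSA : BSA oc Cset.
Proof.
split; first by exists \bot, \bot; rewrite joinxx.
split; first by exists p, (oc p); rewrite (ocU H).
split; first exact: C_meet.
split; first exact: C_join.
split; first exact: C_oc.
move=> x x1 x2 hx hx1 hx2.
have hx12 := C_join hx1 hx2.
apply: C_eq; [exact: C_meet| apply: C_join; exact: C_meet | |].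
- rewrite [(x `&` (x1 `|` x2)) `&` (p)]meet_q (C_joinp (or_introl erefl) hx1 hx2).
  rewrite (C_joinp (or_introl erefl) (C_meet hx hx1) (C_meet hx hx2)) [(x `&` x1) `&` (p)]meet_q [(x `&` x2) `&` (p)]meet_q.
  have [a1 _] := C_p hx; have [a2 _] := C_p hx1; have [a3 _] := C_p hx2.
  exact: YD.
- rewrite [(x `&` (x1 `|` x2)) `&` (oc p)]meet_q (C_joinp (or_intror erefl) hx1 hx2).
  rewrite (C_joinp (or_intror erefl) (C_meet hx hx1) (C_meet hx hx2)) [(x `&` x1) `&` (oc p)]meet_q [(x `&` x2) `&` (oc p)]meet_q.
  have [_ [a1 _]] := C_p hx; have [_ [a2 _]] := C_p hx1; have [_ [a3 _]] := C_p hx2.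
  exact: ZD.
Qed.

End Prod.

Section Construct.
Context {d : Order.disp_t} {L : tbLatticeType d} (oc : L -> L) (H : is_OML oc).
Variables (V A : L -> Prop) (P0 a Q : L).
Hypothesis hVe : forall x, V x <-> (x = \bot \/ x = \top \/ x = P0 \/ x = oc P0).
Hypothesis hA : inB oc A.
Hypothesis hMA : M_ oc V A.
Hypothesis lA : leading_element A P0.
Hypothesis P0c0 : oc P0 <> \bot.
Hypothesis at_a : atomL a.
Hypothesis aP : a <= P0.
Hypothesis hQ : Q = P0 `&` oc a.
Hypothesis naQ : ~ atomL Q.
Hypothesis Q0 : Q <> \bot.

Lemma QP : Q <= P0. Proof. by rewrite hQ leIl. Qed.
Lemma Qoca : Q <= oc a. Proof. by rewrite hQ leIr. Qed.
Lemma aocQ : a <= oc Q. Proof. exact: (le_oc H Qoca). Qed.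
Lemma aQ : a `|` Q = P0. Proof. by rewrite hQ -(omlE H aP). Qed.
Lemma a0 : a <> \bot. Proof. by case: at_a. Qed.
Lemma naP : ~ atomL P0. Proof. by case: lA => _ []. Qed.
Lemma P00 : P0 <> \bot. Proof. by case: lA => [[_ []]]. Qed.
Lemma hAB : BSA oc A. Proof. by case: hA. Qed.
Lemma AP : A P0. Proof. by case: lA => [[]]. Qed.
Lemma APc : A (oc P0). Proof. by have [_ [_ [_ [_ [hC _]]]]] := hAB; apply: hC; exact: AP. Qed.

Definition Yc := B4 a Q.
Definition Zc := fun z => A z /\ z <= oc P0.
Definition Cc := Cset Yc Zc.

Lemma Yle y : Yc y -> y <= P0. Proof. by move=> /B4_le; rewrite aQ. Qed.
Lemma Zle z : Zc z -> z <= oc P0. Proof. by case. Qed.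
Lemma Y0 : Yc \bot. Proof. by left. Qed.
Lemma Yp : Yc P0. Proof. by rewrite -aQ; right; right; right. Qed.
Lemma YU y y' : Yc y -> Yc y' -> Yc (y `|` y'). Proof. exact: B4_join. Qed.
Lemma YC y : Yc y -> Yc (P0 `&` oc y). Proof. rewrite -aQ; exact: (B4_compl H aocQ). Qed.
Lemma YD y y1 y2 : Yc y -> Yc y1 -> Yc y2 -> y `&` (y1 `|` y2) = (y `&` y1) `|` (y `&` y2).
Proof. exact: (B4_distr H aocQ). Qed.
Lemma Z0 : Zc \bot. Proof. by split; [case: hAB|rewrite le0x]. Qed.
Lemma Zp : Zc (oc P0). Proof. by split; [exact: APc|]. Qed.
Lemma ZU y y' : Zc y -> Zc y' -> Zc (y `|` y').
Proof.
move=> [h1 h2] [h3 h4]; split; last by rewrite leUx h2 h4.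
by have [_ [_ [_ [hU _]]]] := hAB; apply: hU.
Qed.
Lemma ZC y : Zc y -> Zc (oc P0 `&` oc y).
Proof.
move=> [h1 h2]; split; last exact: leIl.
have [_ [_ [hI [_ [hC _]]]]] := hAB; apply: hI; [exact: APc| exact: hC].
Qed.
Lemma ZD y y1 y2 : Zc y -> Zc y1 -> Zc y2 -> y `&` (y1 `|` y2) = (y `&` y1) `|` (y `&` y2).
Proof.
move=> [h1 _] [h2 _] [h3 _]; have [_ [_ [_ [_ [_ hD]]]]] := hAB; exact: hD.
Qed.

Lemma CB : BSA oc Cc.
Proof. exact: (C_BSA H Yle Zle Y0 Yp YU YC YD Z0 Zp ZU ZC ZD). Qed.

Lemma Cin y z : Yc y -> Zc z -> Cc (y `|` z).
Proof. by move=> hy hz; exists y, z. Qed.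

Lemma C_Q : Cc Q. Proof. by rewrite -[Q]joinx0; apply: Cin; [right; right; left| exact: Z0]. Qed.
Lemma C_a : Cc a. Proof. by rewrite -[a]joinx0; apply: Cin; [right; left| exact: Z0]. Qed.

Lemma Cle_Q w : Cc w -> w <= Q -> w = \bot \/ w = Q.
Proof.
move=> [y [z [hy [hz ->]]]]; rewrite leUx => /andP [yQ zQ].
have z0 : z = \bot by apply: (le_both H (le_trans zQ QP)); exact: Zle.
rewrite z0 joinx0.
have aQ0 : ~ a <= Q.
  by move=> h; apply: a0; apply: (le_both H (lexx a)); exact: (le_trans h Qoca).
case: hy => [->|[e|[->|e]]]; [by left| | by right|].
- by exfalso; apply: aQ0; rewrite -e.
- by exfalso; apply: aQ0; apply: le_trans yQ; rewrite e leUl.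
Qed.

Lemma C_atom w : Cc w -> atomL w -> w = a \/ (Vatom A w /\ w <= oc P0).
Proof.
move=> [y [z [hy [hz e]]]] aw.
case: (classic (z = \bot)) => z0.
  rewrite z0 joinx0 in e; subst w.
  case: hy => [e|[->|[e|e]]]; [by case: aw| by left| |].
  - by exfalso; apply: naQ; rewrite -e.
  - by exfalso; apply: naP; rewrite -aQ -e.
have zw : z = w.
  case: aw => _ h; case: (h z) => //; rewrite e leUr //.
subst w; right; rewrite -zw; split; last exact: Zle.
by apply: atom_vatom; [case: hz| rewrite zw].
Qed.

Definition FC (t : L) := t = a \/ t = Q \/ (Vatom A t /\ t <= oc P0).

Lemma A_atom t : Vatom A t -> t <= oc P0 -> atomL t.
Proof.
move=> at_ tP; case: lA => _ [_ h]; apply: h => // e; subst t.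
by apply: P00; apply: (le_both H (lexx _) tP).
Qed.

Lemma C_vatom t : Vatom Cc t <-> FC t.
Proof.
split.
  move=> [[y [z [hy [hz e]]]] [t0 ht]].
  case: (classic (y = \bot)) => y0.
    subst y; rewrite join0x in e; subst z; rewrite /FC; right; right.
    split; last exact: Zle.
    split; first by case: hz.
    split=> // w Aw wt; apply: ht => //.
    by rewrite -[w]join0x; apply: Cin; [exact: Y0| split=> //; exact: le_trans wt (Zle hz)].
  have Cy : Cc y by rewrite -[y]joinx0; apply: Cin => //; exact: Z0.
  have yt : y = t.
    case: (ht y Cy) => //; rewrite e leUl //.
  rewrite -yt /FC.
  case: hy => [e0|[->|[->|e2]]]; [by case: (y0 e0)|by left| by right; left|].
  exfalso; rewrite -yt e2 in ht.
  case: (ht a C_a (leUl _ _)) => e3; first exact: a0.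
  apply: Q0; apply: (le_both H _ Qoca); by rewrite e3 leUr.
move=> [->|[->|[at_ tP]]].
- exact: (atom_vatom C_a at_a).
- split; first exact: C_Q.
  by split=> // w Cw wQ; apply: Cle_Q.
- apply: atom_vatom; last exact: A_atom.
  by rewrite -[t]join0x; apply: Cin; [exact: Y0| split=> //; case: at_].
Qed.


Lemma C_gen : generated_by oc Cc FC.
Proof.
have [_ [_ [[_ hsA] [_ hvA]]]] := gen_vatom hA.
have tPa : forall t, t <= oc P0 -> a <= oc t.
  move=> t tP; apply: le_trans aP _; exact: (le_oc H tP).
have tPQ : forall t, t <= oc P0 -> Q <= oc t.
  move=> t tP; apply: le_trans QP _; exact: (le_oc H tP).
split; first by move=> x [->|[->|[[_ []]]]] //; exact: a0.
split.
  move=> x y [->|[->|[ax xP]]] [->|[->|[ay yP]]] ne //; rewrite /orth.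
  - exact: aocQ.
  - exact: tPa.
  - exact: Qoca.
  - exact: tPQ.
  - apply: le_trans xP _; exact: (ocA H aP).
  - apply: le_trans xP _; exact: (ocA H QP).
  - exact: (vatom_orth H hAB ax ay ne).
split.
  split=> [y _|z hz]; first by rewrite lex1.
  have Pz : P0 <= z by rewrite -aQ leUx !hz //; [right; left| left].
  apply: hsA => s as_.
  case: (vatom_split H hAB AP as_) => h; first exact: le_trans h Pz.
  by apply: hz; right; right.
split; first by move=> x; rewrite C_vatom.
move=> v [y [z [hy [[Az zP] ->]]]].
have [Sz [hSz1 hSz2]] := hvA z Az.
have hSz : forall s, Sz s -> FC s.
  move=> s ss; right; right; split; first exact: hSz1.
  have [u _] := hSz2; exact: le_trans (u _ ss) zP.
case: hy => [->|[->|[->|->]]].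
- exists (fun s => False \/ Sz s); split; first by move=> s [//|/hSz].
  exact: sup_union sup_empty hSz2.
- exists (fun s => s = a \/ Sz s); split; first by move=> s [->|/hSz]; [left|].
  exact: sup_union (sup_single a) hSz2.
- exists (fun s => s = Q \/ Sz s); split; first by move=> s [->|/hSz]; [right; left|].
  exact: sup_union (sup_single Q) hSz2.
- exists (fun s => (s = a \/ s = Q) \/ Sz s); split.
    by move=> s [[->|->]|/hSz]; [left|right; left|].
  apply: sup_union hSz2; exact: sup_union (sup_single a) (sup_single Q).
Qed.

Lemma C_inB : inB oc Cc.
Proof. split; [exact: CB| exists FC; exact: C_gen]. Qed.

Lemma C_lead : leading_element Cc Q.
Proof.
split; first by apply/C_vatom; right; left.
split=> // y /C_vatom [->|[->//|[at_ tP]]] _; [exact: at_a| exact: A_atom].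
Qed.

Lemma C_spiked : spiked oc Cc.
Proof. split; [exact: C_inB| right; exists Q; exact: C_lead]. Qed.

Definition Wc := B4 Q (oc Q).

Lemma W_sub : subsetL Wc Cc.
Proof.
have [h0 [_ [_ [hU [hC _]]]]] := CB.
move=> x [->|[->|[->|->]]] //; [exact: C_Q| exact: hC C_Q| apply: hU C_Q (hC _ C_Q)].
Qed.

Lemma A_sub : subsetL A Cc.
Proof.
have [_ [_ [hI [_ [_ hD]]]]] := hAB.
move=> x Ax.
have e : x = (x `&` P0) `|` (x `&` oc P0).
  by have := hD x P0 (oc P0) Ax AP APc; rewrite (ocU H) meetx1.
have [fP _] := lA.
have [_ [_ hP]] := fP.
rewrite e; apply: Cin; last by split; [exact: hI Ax APc| exact: leIr].
case: (hP _ (hI _ _ Ax AP) (leIr _ _)) => ->; [exact: Y0| exact: Yp].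
Qed.


Lemma C_min A' : S_ oc Wc A' -> subsetL A' Cc -> subsetL Cc A'.
Proof.
move=> [spA' WA'] A'C.
have hA' : inB oc A' by case: spA'.
have hA'B := proj1 hA'.
have [h0' [h1' [hI' [hU' [hC' _]]]]] := hA'B.
have A'Q : A' Q by apply: WA'; right; left.
have [_ [_ [[_ hsup] [_ hv]]]] := gen_vatom hA'.
have vQ : Vatom A' Q.
  have [S [hS1 [hS2 hS3]]] := hv Q A'Q.
  case: (classic (S Q)) => sQ; first exact: hS1.
  exfalso; apply: Q0; apply: le0; apply: hS3 => s ss.
  have [As [s0 _]] := hS1 _ ss.
  by case: (Cle_Q (A'C _ As) (hS2 _ ss)) => e; [case: s0| rewrite e in ss].
have hat : forall s, Vatom A' s -> s <> Q -> atomL s.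
  case: spA' => _ [[_ hm]|[u [fu [nu au]]]].
    by move=> s /hm.
  have uQ : u = Q by apply: NNPP => ne; apply: naQ; apply: au => // e; apply: ne.
  by subst u.
have A'a : A' a.
  apply: NNPP => na; apply: a0.
  have h : \top <= oc a.
    apply: hsup => s vs.
    case: (classic (s = Q)) => sQ; first by rewrite sQ Qoca.
    case: (C_atom (A'C _ (proj1 vs)) (hat _ vs sQ)) => [e|[_ sP]].
      by rewrite e in vs; case: na; case: vs.
    apply: le_trans sP _; exact: (ocA H aP).
  exact: (le_both H (lexx a) (le_trans (lex1 a) h)).
have A'P : A' P0 by rewrite -aQ; apply: hU'.
have hat' : forall t, Vatom A' t -> t <= oc P0 -> atomL t.
  move=> t vt tP; apply: hat => // e; subst t; apply: Q0; exact: (le_both H QP tP).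
have [hRin [hRsp _]] := restr_lead H hA'B A'P P00 hA' naP hat'.
have [r0 [r1 [_ [_ [rC _]]]]] := proj1 hRin.
have RP : restr A' P0 P0 by split=> //; right.
have hS : S_ oc V (restr A' P0).
  split=> // x /hVe [->|[->|[->|->]]] //; exact: rC.
have hRA : subsetL (restr A' P0) A.
  have [_ [_ [_ [hUA _]]]] := hAB.
  move=> x [A'x ex]; have [y [z [hy [[Az zP] ex2]]]] := A'C _ A'x.
  have yP := Yle hy.
  have e3 : x `&` P0 = y by rewrite ex2 (L4 H yP zP).
  case: ex => ex.
    by rewrite ex2 -e3 ex join0x.
  have : y = P0 by rewrite -e3; apply: le_anti; rewrite leIr lexI ex lexx.
  by move=> ey; rewrite ex2 ey; apply: hUA => //; exact: AP.
have AR := proj2 hMA _ hS hRA.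
move=> v [y [z [hy [[Az zP] ->]]]].
apply: (hU'); last by case: (AR _ Az).
case: hy => [->|[->|[->|->]]] //; exact: hU'.
Qed.

Lemma C_M : M_ oc Wc Cc /\ subsetL A Cc.
Proof.
split; last exact: A_sub.
split; first by split; [exact: C_spiked| exact: W_sub].
exact: C_min.
Qed.

End Construct.

Section WP.
Context {d : Order.disp_t} {L : tbLatticeType d} (oc : L -> L) (H : is_OML oc).
Variables (V : L -> Prop) (P0 a b c Q : L).
Hypothesis hVe : forall x, V x <-> (x = \bot \/ x = \top \/ x = P0 \/ x = oc P0).
Hypothesis P0c0 : oc P0 <> \bot.
Hypotheses (at_a : atomL a) (at_b : atomL b) (at_c : atomL c).
Hypotheses (aP : a <= P0) (bP : b <= P0) (cP : c <= P0) (ba : b <= oc a) (ca : c <= oc a) (bc : b <> c).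
Hypothesis hQ : Q = P0 `&` oc a.

Lemma bQ : b <= Q. Proof. by rewrite hQ lexI bP ba. Qed.
Lemma cQ : c <= Q. Proof. by rewrite hQ lexI cP ca. Qed.
Lemma W_Q0 : Q <> \bot.
Proof. move=> e; case: at_b => b0 _; apply: b0; apply: le0; by rewrite -e bQ. Qed.
Lemma W_naQ : ~ atomL Q.
Proof.
move=> [_ h]; case: (h b bQ) => eb; first by case: at_b.
case: (h c cQ) => ec; first by case: at_c.
by apply: bc; rewrite eb ec.
Qed.
Lemma QT : Q <> \top.
Proof.
move=> e; case: at_a => a0 _; apply: a0; apply: (le_both H (lexx a)).
by apply: le_trans (lex1 a) _; rewrite -e hQ leIr.
Qed.
Lemma ocQ0 : oc Q <> \bot.
Proof. by move=> e; apply: QT; rewrite -(ocK H Q) e (oc0 H). Qed.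
Lemma W_naQc : ~ atomL (oc Q).
Proof.
move=> [_ h].
have PQ : oc P0 <= oc Q by apply: (ocA H); rewrite hQ leIl.
case: (h _ PQ) => // e.
have e2 : P0 = Q by rewrite -(ocK H P0) e (ocK H).
case: at_a => a0 _; apply: a0; apply: (le_both H (lexx a)).
by apply: le_trans aP _; rewrite e2 hQ leIr.
Qed.

Local Notation Wq := (Wc oc Q).
Lemma QocQ : Q <= oc (oc Q). Proof. by rewrite (ocK H). Qed.

Lemma W_BSA : BSA oc Wq.
Proof.
rewrite /Wc.
split; first by rewrite /B4; left.
split; first by rewrite /B4; right; right; right; rewrite (ocU H).
split; first by move=> x y; apply: (B4_meet H QocQ).
split; first by move=> x y; apply: B4_join.
split.
  move=> x hx; rewrite -[oc x]meet1x -(ocU H Q); exact: (B4_compl H QocQ).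
by move=> x y z; apply: (B4_distr H QocQ).
Qed.

Lemma W_vatom x : Vatom Wq x <-> x = Q \/ x = oc Q.
Proof.
rewrite /Wc /B4.
split.
  move=> [hx [x0 h]]; case: hx => [e|[->|[->|e]]]; [by []| by left| by right|].
  exfalso; case: (h Q) => //; [by right; left| by rewrite e leUl| exact: W_Q0|].
  by move=> e2; apply: QT; rewrite e2 e (ocU H).
case=> ->.
  split; first by right; left.
  split; first exact: W_Q0.
  move=> w [->|[->|[->|->]]]; [by left| by right| |].
    by move=> h; exfalso; apply: ocQ0; apply: (le_both H h (lexx _)).
  by rewrite (ocU H) => h; exfalso; apply: QT; apply: le_anti; rewrite h lex1.
split; first by right; right; left.
split; first exact: ocQ0.
move=> w [->|[->|[->|->]]]; [by left| | by right|].
  by move=> h; exfalso; apply: W_Q0; apply: (le_both H (lexx _) h).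
rewrite (ocU H) => h; exfalso; apply: W_Q0.
have eT : oc Q = \top by apply: le_anti; rewrite h lex1.
by rewrite -(ocK H Q) eT (oc1 H).
Qed.

Lemma W_inB : inB oc Wq.
Proof.
split; first exact: W_BSA.
exists (fun x => x = Q \/ x = oc Q).
split; first by move=> x [->|->]; [exact: W_Q0| exact: ocQ0].
split.
  move=> x y [->|->] [->|->] ne //; rewrite /orth ?lexx //; exact: QocQ.
split.
  split=> [y _|z hz]; first by rewrite lex1.
  rewrite -(ocU H Q) leUx; apply/andP; split; apply: hz; [left| right]; done.
split; first by move=> x; rewrite W_vatom.
rewrite /Wc /B4; move=> v [->|[->|[->|->]]].
- by exists (fun _ => False); split=> //; exact: sup_empty.
- by exists (fun y => y = Q); split; [move=> y ->; left| exact: sup_single].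
- by exists (fun y => y = oc Q); split; [move=> y ->; right| exact: sup_single].
- exists (fun y => y = Q \/ y = oc Q); split=> //.
  exact: sup_union (sup_single Q) (sup_single (oc Q)).
Qed.

Lemma W_two : two_dim Wq.
Proof.
exists Q, (oc Q); split; last exact: W_vatom.
move=> e; apply: W_Q0; apply: (le_both H (lexx Q)); rewrite -e lexx //.
Qed.

Lemma W_ns : ~ spiked oc Wq.
Proof.
move=> [_ [[_ hm]|[u [fu [nu au]]]]].
  by apply: W_naQ; apply: hm; apply/W_vatom; left.
have ne : Q <> oc Q by move=> e; apply: W_Q0; apply: (le_both H (lexx Q)); rewrite -e lexx.
case/W_vatom: fu => eu; subst u.
  by apply: W_naQc; apply: au => //; [apply/W_vatom; right| move=> e; apply: ne].
by apply: W_naQ; apply: au => //; apply/W_vatom; left.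
Qed.

Lemma W_neV : ~ (forall x, Wq x <-> V x).
Proof.
move=> e; have : V Q by apply/e; rewrite /Wc /B4; right; left.
move=> /hVe [e1|[e1|[e1|e1]]].
- exact: W_Q0 e1.
- exact: QT e1.
- case: at_a => a0 _; apply: a0; apply: (le_both H (lexx a)).
  by apply: le_trans aP _; rewrite -e1 hQ leIr.
- case: at_b => b0 _; apply: b0; apply: (le_both H bP); by rewrite -e1 bQ.
Qed.

End WP.

Lemma forward_core {d : Order.disp_t} {L : tbLatticeType d} (oc : L -> L) (H : is_OML oc)
  (V A B : L -> Prop) (P0 : L)
  (hVe : forall x, V x <-> (x = \bot \/ x = \top \/ x = P0 \/ x = oc P0))
  (P0c0 : oc P0 <> \bot) (hA : inB oc A) (hB : inB oc B) (hMA : M_ oc V A) (hMB : M_ oc V B)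
  (lA : leading_element A P0) (lB : leading_element B P0)
  (h3 : join_of_three_or_more_atoms oc P0) :
  (exists W : L -> Prop, inB oc W /\ two_dim W /\ ~ spiked oc W /\
     ~ (forall x, W x <-> V x) /\
     exists C D : L -> Prop, M_ oc W C /\ M_ oc W D /\
       subsetL A C /\ subsetL B D).
Proof.
move: h3 => [S [hSa [hSo [[hSup _] [a [b [c [Sa [Sb [Sc [ab [ac bc]]]]]]]]]]]].
have aP := hSup a Sa; have bP := hSup b Sb; have cP := hSup c Sc.
have ba : b <= oc a by apply: hSo => // e; apply: ab.
have ca : c <= oc a by apply: hSo => // e; apply: ac.
have at_a := hSa a Sa; have at_b := hSa b Sb; have at_c := hSa c Sc.
have hQ : P0 `&` oc a = P0 `&` oc a by [].
have naQ := W_naQ at_b at_c bP cP ba ca bc hQ.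
have Q0 := W_Q0 at_b bP ba hQ.
exists (Wc oc (P0 `&` oc a)).
split; first exact: (W_inB H at_a at_b bP ba hQ).
split; first exact: (W_two H at_a at_b bP ba hQ).
split; first exact: (W_ns H P0c0 at_a at_b at_c aP bP cP ba ca bc hQ).
split; first exact: (W_neV H hVe at_a at_b aP bP ba hQ).
have [MC AC] := C_M H hVe hA hMA lA at_a aP hQ naQ Q0.
have [MD BD] := C_M H hVe hB hMB lB at_a aP hQ naQ Q0.
by exists (Cc oc A P0 a (P0 `&` oc a)), (Cc oc B P0 a (P0 `&` oc a)).
Qed.

Theorem lemma5p1 (d : Order.disp_t) (L : tbLatticeType d) (oc : L -> L)
  (hOML : is_OML oc) (hatomic : atomic (L := L))
  (V : L -> Prop) (P : L) (hV : inB oc V)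
  (hFV : forall x, FV V x <-> x = P \/ x = oc P)
  (hVns : ~ spiked oc V)
  (hP : join_of_three_or_more_atoms oc P)
  (hPc : join_of_three_or_more_atoms oc (oc P))
  (A B : L -> Prop) (hA : M_ oc V A) (hB : M_ oc V B) :
  (exists x, leading_element A x /\ leading_element B x) <->
  (exists W : L -> Prop, inB oc W /\ two_dim W /\ ~ spiked oc W /\
     ~ (forall x, W x <-> V x) /\
     exists C D : L -> Prop, M_ oc W C /\ M_ oc W D /\
       subsetL A C /\ subsetL B D).
Proof.
have H := hOML.
have hVe := V_elems H hV hFV.
have hVe' : forall x, V x <-> (x = \bot \/ x = \top \/ x = oc P \/ x = oc (oc P)).
  by move=> x; rewrite hVe (ocK H); tauto.
have P0 : P <> \bot by apply: (FV_ne0 (V0 := V)); apply/hFV; left.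
have Pc0 : oc P <> \bot by apply: (FV_ne0 (V0 := V)); apply/hFV; right.
have hAin : inB oc A by case: (proj1 (proj1 hA)).
have hBin : inB oc B by case: (proj1 (proj1 hB)).
have AV : forall x, V x -> A x := proj2 (proj1 hA).
have BV : forall x, V x -> B x := proj2 (proj1 hB).
have VP : V P by apply/hVe; tauto.
have VPc : V (oc P) by apply/hVe; tauto.
have lAd := M_lead H hV hFV hVns hA.
have lBd := M_lead H hV hFV hVns hB.
split.
  move=> [x [lAx lBx]].
  case: lAd => lAP.
    have ex := lead_uniq lAx lAP; subst x.
    exact: (forward_core H hVe Pc0 hAin hBin hA hB lAP lBx hP).
  have ex := lead_uniq lAx lAP; subst x.
  apply: (forward_core H hVe' _ hAin hBin hA hB lAP lBx hPc).
  by rewrite (ocK H).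
move=> [W [hW [h2 [hWns [hWV [C [D [hC [hD [AC BD]]]]]]]]]].
have [Q hFW] := two_dim_oc H hW h2.
have hCin : inB oc C by case: (proj1 (proj1 hC)).
have hDin : inB oc D by case: (proj1 (proj1 hD)).
have lCd := M_lead H hW hFW hWns hC.
have lDd := M_lead H hW hFW hWns hD.
case: lAd => lA; case: lBd => lB.
- by exists P.
- exfalso.
  case: lCd => lC; case: lDd => lD;
  apply: (cross H hVe hW hFW hWV hAin hBin (AV _ VPc) (BV _ VP) lA lB hCin hDin AC BD lC lD); tauto.
- exfalso.
  have lB' : leading_element B (oc (oc P)) by rewrite (ocK H).
  have AP' : A (oc (oc P)) by rewrite (ocK H); exact: AV.
  case: lCd => lC; case: lDd => lD;
  apply: (cross H hVe' hW hFW hWV hAin hBin AP' (BV _ VPc) lA lB' hCin hDin AC BD lC lD); tauto.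
- by exists (oc P).
Qed.
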